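(* Let $R$ be a ring (associative with identity) and $n$ a positive integer. The following are equivalent: (1) $R$ is $n$-clean; (2) every factor ring of $R$ is $n$-clean; (3) every indecomposable factor ring of $R$ is $n$-clean; (4) every Pierce stalk of $R$ is $n$-clean.
   Context: A ring is $n$-clean if each of its elements can be written as $e+u_1+\cdots+u_n$ with $e$ an idempotent and $u_1,\dots,u_n$ units. A ring is indecomposable if it is not isomorphic to a direct product of two nonzero rings. Let $S(R)$ be the set of all proper ideals of $R$ generated by central idempotents. A Pierce ideal of $R$ is a maximal (with respect to inclusion) element of $S(R)$, and if $P$ is a Pierce ideal, the factor ring $R/P$ is called a Pierce stalk of $R$. *)

(* Defs.v *)
From HB Require Import structures.
From mathcomp Require Import all_boot all_algebra.
Set Implicit Arguments. Unset Strict Implicit. Unset Printing Implicit Defensive.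
Import GRing.Theory.
Local Open Scope ring_scope.

Definition is_unit (S : pzRingType) (u : S) : Prop :=
  exists v : S, u * v = 1 /\ v * u = 1.

Definition idempotent (S : pzRingType) (e : S) : Prop := e * e = e.

Definition n_clean (n : nat) (S : pzRingType) : Prop :=
  forall x : S, exists e : S, idempotent e /\
    exists u : 'I_n -> S, (forall i, is_unit (u i)) /\ x = e + \sum_(i < n) u i.

Definition nonzero_ring (S : pzRingType) : Prop := (1 : S) <> 0.

Definition indecomposable (S : pzRingType) : Prop :=
  ~ exists (S1 S2 : pzRingType) (g : {rmorphism S -> (S1 * S2)%type}),
      nonzero_ring S1 /\ nonzero_ring S2 /\ bijective g.

Definition is_ideal (R : pzRingType) (I : R -> Prop) : Prop :=
  [/\ I 0, (forall x y, I x -> I y -> I (x + y)), (forall x, I x -> I (- x)),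
      (forall r x, I x -> I (r * x)) & (forall r x, I x -> I (x * r))].

Definition proper_ideal (R : pzRingType) (I : R -> Prop) : Prop :=
  is_ideal I /\ ~ I 1.

Definition central (R : pzRingType) (x : R) : Prop := forall y, x * y = y * x.

Definition ideal_gen (R : pzRingType) (E : R -> Prop) : R -> Prop :=
  fun x => forall J : R -> Prop, is_ideal J -> (forall e, E e -> J e) -> J x.

Definition in_SR (R : pzRingType) (I : R -> Prop) : Prop :=
  proper_ideal I /\
  exists E : R -> Prop, (forall e, E e -> central e /\ idempotent e) /\
    (forall x, I x <-> ideal_gen E x).

Definition pierce_ideal (R : pzRingType) (P : R -> Prop) : Prop :=
  in_SR P /\ forall J : R -> Prop, in_SR J -> (forall x, P x -> J x) ->
    forall x, J x -> P x.

(* Factor rings R/I are represented (up to isomorphism) as surjective ring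
   morphisms f : R -> S; the factor ring R/I is S with ker f = I. *)
Definition factor_map (R S : pzRingType) (f : {rmorphism R -> S}) : Prop :=
  forall y : S, exists x : R, f x = y.

Definition kernel_is (R S : pzRingType) (f : {rmorphism R -> S}) (I : R -> Prop)
  : Prop := forall x, f x = 0 <-> I x.

(* Main.v *)
Require Import Defs.
From HB Require Import structures.
From mathcomp Require Import all_boot all_algebra.
From mathcomp Require Import boolp classical_sets generic_quotient.
Local Open Scope ring_scope.
Set Implicit Arguments. Unset Strict Implicit. Unset Printing Implicit Defensive.
Import GRing.Theory.


Section Quot.
Local Open Scope quotient_scope.
Variables (R : pzRingType) (M : R -> Prop).
Hypothesis HM : is_ideal M.

Definition eqv (x y : R) : bool := `[< M (x - y) >].

Lemma eqvE x y : eqv x y = true <-> M (x - y).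
Proof. by split => [/asboolP|/asboolP]. Qed.

Lemma eqv_is_equiv : equiv_class_of eqv.
Proof.
have [H0 HD HN HL HR] := HM.
split=> [x|x y|y x z].
- by apply/asboolP; rewrite subrr.
- by apply/asboolP/asboolP => /HN; rewrite opprB.
- move=> /asboolP h1 /asboolP h2; apply/asboolP.
  by have := HD _ _ h1 h2; rewrite addrA subrK.
Qed.

Canonical eqv_equiv := EquivRelPack eqv_is_equiv.
Canonical eqv_encModRel := defaultEncModRel eqv.

Definition quot of is_ideal M := {eq_quot eqv}.
Local Notation Q := (quot HM).

HB.instance Definition _ : EqQuotient R eqv Q := EqQuotient.on Q.
HB.instance Definition _ := Choice.on Q.

Lemma piEq x y : (\pi_Q x = \pi_Q y) <-> M (x - y).
Proof. split => [/eqP|h]; first by rewrite piE => /asboolP.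
by apply/eqP; rewrite piE; apply/asboolP. Qed.

Lemma Mrepr x : M (repr (\pi_Q x) - x).
Proof. by apply/piEq; rewrite reprK. Qed.

Definition qzero : Q := lift_cst Q 0.
Definition qadd := lift_op2 Q +%R.
Definition qopp := lift_op1 Q -%R.
Canonical pi_qzero_morph := PiConst qzero.

Lemma pi_qopp : {morph \pi_Q : x / - x >-> qopp x}.
Proof.
move=> x; unlock qopp; apply/piEq; have [H0 HD HN HL HR] := HM.
by rewrite opprK addrC; exact: Mrepr.
Qed.
Canonical pi_qopp_morph := PiMorph1 pi_qopp.

Lemma pi_qadd : {morph \pi_Q : x y / x + y >-> qadd x y}.
Proof.
move=> x y /=; unlock qadd; apply/piEq; have [H0 HD HN HL HR] := HM.
set rx := repr _; set ry := repr _.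
suff -> : x + y - (rx + ry) = - ((rx - x) + (ry - y)).
  by apply/HN/HD; apply: Mrepr.
by rewrite [RHS]opprD !opprB [in LHS]opprD addrACA.
Qed.
Canonical pi_qadd_morph := PiMorph2 pi_qadd.

Lemma qaddA: associative qadd.
Proof. by move=> x y z; rewrite -[x]reprK -[y]reprK -[z]reprK !piE addrA. Qed.
Lemma qaddC: commutative qadd.
Proof. by move=> x y; rewrite -[x]reprK -[y]reprK !piE addrC. Qed.
Lemma qadd0: left_id qzero qadd.
Proof. by move=> x; rewrite -[x]reprK !piE add0r. Qed.
Lemma qaddN: left_inverse qzero qopp qadd.
Proof. by move=> x; rewrite -[x]reprK !piE addNr. Qed.

HB.instance Definition _ := GRing.isZmodule.Build Q qaddA qaddC qadd0 qaddN.

Definition qone : Q := lift_cst Q 1.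
Definition qmul := lift_op2 Q *%R.
Canonical pi_qone_morph := PiConst qone.

Lemma pi_qmul: {morph \pi_Q : x y / x * y >-> qmul x y}.
Proof.
move=> x y; unlock qmul; apply/piEq; have [H0 HD HN HL HR] := HM.
set a := repr _; set b := repr _.
have e : x * y - a * b = - ((a - x) * b + x * (b - y)).
  by rewrite mulrBl mulrBr addrA subrK opprB.
rewrite e; apply/HN/HD; [apply: HR|apply: HL]; exact: Mrepr.
Qed.
Canonical pi_qmul_morph := PiMorph2 pi_qmul.

Lemma qmulA: associative qmul.
Proof. by move=> x y z; rewrite -[x]reprK -[y]reprK -[z]reprK !piE mulrA. Qed.
Lemma qmul1: left_id qone qmul.
Proof. by move=> x; rewrite -[x]reprK !piE mul1r. Qed.
Lemma qmulr1: right_id qone qmul.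
Proof. by move=> x; rewrite -[x]reprK !piE mulr1. Qed.
Lemma qmulDl: left_distributive qmul +%R.
Proof. by move=> x y z; rewrite -[x]reprK -[y]reprK -[z]reprK !piE mulrDl. Qed.
Lemma qmulDr: right_distributive qmul +%R.
Proof. by move=> x y z; rewrite -[x]reprK -[y]reprK -[z]reprK !piE mulrDr. Qed.

HB.instance Definition _ := GRing.Zmodule_isPzRing.Build Q qmulA qmul1 qmulr1 qmulDl qmulDr.

Definition qpi (x : R) : Q := \pi_Q x.

Lemma qpi_zmod : zmod_morphism qpi.
Proof. by move=> x y; rewrite /qpi !piE. Qed.
Lemma qpi_monoid : monoid_morphism qpi.
Proof. by split => [|x y]; rewrite /qpi !piE. Qed.
HB.instance Definition _ := GRing.isZmodMorphism.Build R Q qpi qpi_zmod.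
HB.instance Definition _ := GRing.isMonoidMorphism.Build R Q qpi qpi_monoid.

Lemma qpi_factor : factor_map qpi.
Proof. by move=> y; exists (repr y); exact: reprK. Qed.

Lemma qpi_kernel : kernel_is qpi M.
Proof.
move=> x; rewrite -(rmorph0 qpi) /qpi; rewrite piEq subr0 //.
Qed.
End Quot.

Definition cleanmod (R : pzRingType) (n : nat) (K : R -> Prop) (x : R) : Prop :=
  exists e : R, K (e * e - e) /\ exists u v : 'I_n -> R,
    (forall i, K (u i * v i - 1) /\ K (v i * u i - 1)) /\
    K (x - (e + \sum_(i < n) u i)).

Section Main.
Variables (R : pzRingType) (n : nat).

Lemma surj_clean (S : pzRingType) (f : {rmorphism R -> S}) :
  factor_map f -> n_clean n R -> n_clean n S.
Proof.
move=> hf hR y; have [x <-] := hf y.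
have [e [he [u [hu ->]]]] := hR x.
exists (f e); split; first by rewrite /Defs.idempotent -(rmorphM f) he.
exists (fun i => f (u i)); split.
  move=> i; have [v [h1 h2]] := hu i; exists (f v).
  by rewrite -!(rmorphM f) h1 h2 rmorph1.
by rewrite rmorphD rmorph_sum.
Qed.

Lemma transfer (S : pzRingType) (f : {rmorphism R -> S}) (K : R -> Prop) :
  factor_map f -> kernel_is f K -> n_clean n S -> forall x, cleanmod n K x.
Proof.
move=> hf hk hS x.
pose g y := projT1 (cid (hf y)).
have gK y : f (g y) = y by rewrite /g; case: cid.
have [e [he [u [hu hx]]]] := hS (f x).
have [v hv] := choice hu.
exists (g e); split.
  by apply/hk; rewrite rmorphB rmorphM gK he subrr.
exists (fun i => g (u i)), (fun i => g (v i)); split.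
  move=> i; have [h1 h2] := hv i; split; apply/hk;
  by rewrite rmorphB rmorphM !gK rmorph1 ?h1 ?h2 subrr.
apply/hk; rewrite rmorphB rmorphD rmorph_sum gK.
under eq_bigr do rewrite gK.
by rewrite -hx subrr.
Qed.

Lemma clean0 : (forall x, cleanmod n (fun y : R => y = 0) x) -> n_clean n R.
Proof.
move=> h x; have [e [he [u [v [huv hx]]]]] := h x.
exists e; split; first by apply/eqP; rewrite -subr_eq0 he.
exists u; split; last by apply/eqP; rewrite -subr_eq0 hx.
move=> i; exists (v i); have [h1 h2] := huv i.
by split; apply/eqP; rewrite -subr_eq0 ?h1 ?h2.
Qed.

Lemma trivial_clean : (1 : R) = 0 -> n_clean n R.
Proof.
move=> h10; have z : forall y : R, y = 0 by move=> y; rewrite -[y]mulr1 h10 mulr0.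
move=> x; exists 0; split; first by rewrite /Defs.idempotent mulr0.
exists (fun _ => 0); split; first by move=> i; exists 0; rewrite mulr0 h10.
by rewrite (z x) (z (0 + _)).
Qed.

Lemma ideal_gen_ideal (E : R -> Prop) : is_ideal (ideal_gen E).
Proof.
split.
- by move=> J [] .
- by move=> x y hx hy J hJ hE; case: (hJ) => _ hD _ _ _; apply: hD; [exact: hx|exact: hy].
- by move=> x hx J hJ hE; case: (hJ) => _ _ hN _ _; apply: hN; exact: hx.
- by move=> r x hx J hJ hE; case: (hJ) => _ _ _ hL _; apply: hL; exact: hx.
- by move=> r x hx J hJ hE; case: (hJ) => _ _ _ _ hR; apply: hR; exact: hx.
Qed.

Lemma gen_sub (E : R -> Prop) y : E y -> ideal_gen E y.
Proof. by move=> hy J _ hE; apply: hE. Qed.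

Lemma gen_min (E J : R -> Prop) : is_ideal J -> (forall e, E e -> J e) ->
  forall y, ideal_gen E y -> J y.
Proof. by move=> hJ hE y hy; apply: hy. Qed.

Lemma gen_mono (E E' : R -> Prop) : (forall e, E e -> E' e) ->
  forall y, ideal_gen E y -> ideal_gen E' y.
Proof. by move=> hE y hy J hJ hE'; apply: hy => // e /hE /hE'. Qed.

Lemma chain_ideal (F : (R -> Prop) -> Prop) :
  (forall K, F K -> is_ideal K) -> (exists K, F K) -> total_on F subset ->
  is_ideal (fun y => exists K, F K /\ K y).
Proof.
move=> hI [K0 FK0] tot; split.
- by exists K0; split => //; case: (hI K0 FK0).
- move=> x y [K1 [F1 h1]] [K2 [F2 h2]].
  case: (tot K1 K2 F1 F2) => sub.
  + exists K2; split => //; case: (hI K2 F2) => _ hD _ _ _; apply: hD => //; exact: sub.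
  + exists K1; split => //; case: (hI K1 F1) => _ hD _ _ _; apply: hD => //; exact: sub.
- move=> x [K [FK h]]; exists K; split => //; by case: (hI K FK) => _ _ hN _ _; apply: hN.
- move=> r x [K [FK h]]; exists K; split => //; by case: (hI K FK) => _ _ _ hL _; apply: hL.
- move=> r x [K [FK h]]; exists K; split => //; by case: (hI K FK) => _ _ _ _ hR; apply: hR.
Qed.

Lemma chain_fin (F : (R -> Prop) -> Prop) (K1 : R -> Prop) :
  F K1 -> total_on F subset -> forall s : seq R,
  (forall y, y \in s -> exists K, F K /\ K y) ->
  exists K, F K /\ forall y, y \in s -> K y.
Proof.
move=> FK1 tot; elim=> [|a s IH] hs; first by exists K1.
have [Ka [hFa ha]] := hs a (mem_head _ _).
have [Ks [hFs hKs]] : exists K, F K /\ forall y, y \in s -> K y.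
  by apply: IH => y hy; apply: hs; rewrite in_cons hy orbT.
case: (tot Ka Ks hFa hFs) => sub.
- exists Ks; split => // y; rewrite in_cons => /orP[/eqP->|/hKs //]; exact: sub.
- exists Ka; split => // y; rewrite in_cons => /orP[/eqP->|/hKs /sub //] //.
Qed.

Lemma chain_clean (F : (R -> Prop) -> Prop) (K1 : R -> Prop) x :
  F K1 -> total_on F subset ->
  cleanmod n (fun y => exists K, F K /\ K y) x -> exists K, F K /\ cleanmod n K x.
Proof.
move=> FK1 tot [e [he [u [v [huv hx]]]]].
pose s := [:: e * e - e; x - (e + \sum_(i < n) u i)] ++
   [seq u i * v i - 1 | i <- enum 'I_n] ++ [seq v i * u i - 1 | i <- enum 'I_n].
have hs : forall y, y \in s -> exists K, F K /\ K y.
  move=> y; rewrite !mem_cat !inE => /orP[/orP[/eqP->|/eqP->]|/orP[]] //.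
  - by move=> /mapP[i _ ->]; case: (huv i).
  - by move=> /mapP[i _ ->]; case: (huv i).
have [K [FK hK]] := chain_fin FK1 tot hs.
exists K; split => //; exists e; split; first by apply: hK; rewrite !mem_cat !inE eqxx.
exists u, v; split; last by apply: hK; rewrite !mem_cat !inE eqxx orbT.
move=> i; split; apply: hK; rewrite !mem_cat; apply/orP; right; apply/orP.
- by left; apply/mapP; exists i; rewrite ?mem_enum.
- by right; apply/mapP; exists i; rewrite ?mem_enum.
Qed.

Definition P0 (Q : (R -> Prop) -> Prop) x (K : R -> Prop) :=
  is_ideal K /\ ~ K 1 /\ Q K /\ ~ cleanmod n K x.

Lemma zorn_ideal (Q : (R -> Prop) -> Prop) x
  (hQ : forall F : (R -> Prop) -> Prop, (forall K, F K -> P0 Q x K) ->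
     (exists K, F K) -> total_on F subset -> Q (fun y => exists K, F K /\ K y))
  (K0 : R -> Prop) : P0 Q x K0 ->
  exists M, P0 Q x M /\ forall K, is_ideal K -> ~ K 1 -> Q K ->
    (forall y, M y -> K y) -> ~ (forall y, K y -> M y) -> cleanmod n K x.
Proof.
move=> h0.
pose P := fun A : set R => A = set0 \/ P0 Q x A.
have [A [PA Amax]] : exists A, P A /\ forall B, proper A B -> ~ P B.
  apply: Zorn_bigcup => F FP Ftot.
  have [[K1 [FK1 PK1]]|nF] := pselect (exists K, F K /\ P0 Q x K).
  - right; pose F' := fun K => F K /\ P0 Q x K.
    have eqU : bigcup F id = (fun y => exists K, F' K /\ K y).
      apply/funext => y; apply/propext; split.
      + case=> K FK Ky; exists K; split => //; split => //.
        case: (FP K FK) => // K0e; move: Ky; rewrite K0e; case.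
      + by case=> K [[FK _] Ky]; exists K.
    rewrite eqU.
    have F'tot : total_on F' subset by move=> s t [Fs _] [Ft _]; exact: Ftot.
    have F'ne : exists K, F' K by exists K1.
    have F'P : forall K, F' K -> P0 Q x K by move=> K [].
    split; first by apply: chain_ideal => // K /F'P [].
    split; first by case=> K [[_ [_ [h1 _]]] hK1].
    split; first exact: hQ.
    move=> hc; have [K [[_ [_ [_ [_ hK]]]] hcK]] := chain_clean (K1 := K1) (conj FK1 PK1) F'tot hc.
    exact: hK hcK.
  - left; apply/funext => y; apply/propext; split => [[K FK Ky]|[]].
    case: (FP K FK) => [K0e|PK]; first by move: Ky; rewrite K0e.
    by exfalso; apply: nF; exists K.
have PA0 : P0 Q x A.
  case: PA => // A0; exfalso; apply: (Amax K0); last by right.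
  rewrite A0; split; first by move=> ? [].
  move=> h; case: h0 => [[hz _ _ _ _] _]; exact: (h 0 hz).
exists A; split => // K hK hK1 hQK hAK hKA.
have [//|nc] := pselect (cleanmod n K x).
exfalso; apply: (Amax K); first by split.
by right.
Qed.

Lemma central_q (S : pzRingType) (f : {rmorphism R -> S}) (c : R) :
  factor_map f -> central c -> central (f c).
Proof. by move=> hf hc y; have [r <-] := hf y; rewrite -!rmorphM hc. Qed.

Lemma idealK (S : pzRingType) (f : {rmorphism R -> S}) (M : R -> Prop) (c : R) :
  kernel_is f M -> central (f c) -> is_ideal (fun y => M (y * c)).
Proof.
move=> hk hc; split.
- by apply/hk; rewrite mul0r rmorph0.
- by move=> a b /hk ha /hk hb; apply/hk; rewrite mulrDl rmorphD ha hb addr0.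
- by move=> a /hk ha; apply/hk; rewrite mulNr rmorphN ha oppr0.
- by move=> r a /hk ha; apply/hk; rewrite -mulrA rmorphM ha mulr0.
- move=> r a /hk ha; apply/hk.
  by rewrite -mulrA !rmorphM -(hc (f r)) mulrA -rmorphM ha mul0r.
Qed.

Lemma genK (M E : R -> Prop) (hM : is_ideal M)
  (hME : forall y, M y <-> ideal_gen E y) (c : R) :
  is_ideal (fun y => M (y * c)) -> Defs.idempotent c ->
  forall y, M (y * c) <-> ideal_gen (fun e => E e \/ e = 1 - c) y.
Proof.
move=> hK hci y; split.
- move=> hy.
  have -> : y = y * c + y * (1 - c) by rewrite mulrBr mulr1 addrC subrK.
  have [_ hD _ hL _] := ideal_gen_ideal (fun e => E e \/ e = 1 - c).
  apply: hD; last by apply: hL; apply: gen_sub; right.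
  apply: (gen_mono (E := E)); first by move=> e; left.
  exact/hME.
- apply: (@gen_min _ (fun y => M (y * c)) hK) => e [/gen_sub/hME he|->].
  + by case: hM => _ _ _ _ hR; apply: hR.
  + rewrite mulrBl mul1r hci subrr; by case: hM.
Qed.

Section Side.
Variables (Q : pzRingType) (d : Q).
Hypotheses (hd : central d) (hdi : Defs.idempotent d).

Lemma L1 y z : (y * z) * d = (y * d) * (z * d).
Proof. by rewrite -!mulrA; congr (y * _); rewrite mulrA (hd z) -mulrA hdi. Qed.

Lemma side (x a E : Q) (u v U V : 'I_n -> Q) :
  E * d = a * d -> (forall i, U i * d = u i * d) -> (forall i, V i * d = v i * d) ->
  (a * a - a) * d = 0 ->
  (forall i, (u i * v i - 1) * d = 0 /\ (v i * u i - 1) * d = 0) ->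
  (x - (a + \sum_(i < n) u i)) * d = 0 ->
  (E * E - E) * d = 0 /\
  (forall i, (U i * V i - 1) * d = 0 /\ (V i * U i - 1) * d = 0) /\
  (x - (E + \sum_(i < n) U i)) * d = 0.
Proof.
move=> hE hU hV ha huv hx; split; first by rewrite mulrBl L1 hE -L1 -mulrBl.
split.
  move=> i; have [h1 h2] := huv i.
  by split; rewrite mulrBl L1 hU hV -L1 -mulrBl.
rewrite mulrBl mulrDl mulr_suml hE.
under eq_bigr do rewrite hU.
by rewrite -mulr_suml -mulrDl -mulrBl.
Qed.

Lemma split0 z : z * d = 0 -> z * (1 - d) = 0 -> z = 0.
Proof. by move=> h1 h2; rewrite -[z]mulr1 -(subrK d 1) mulrDr h1 h2 addr0. Qed.

Lemma central1m : central (1 - d).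
Proof. by move=> y; rewrite mulrBl mulrBr mul1r mulr1 hd. Qed.

Lemma idem1m : Defs.idempotent (1 - d).
Proof. by rewrite /Defs.idempotent mulrBl mul1r mulrBr mulr1 hdi subrr subr0. Qed.

Lemma mixL a b : (a * d + b * (1 - d)) * d = a * d.
Proof. by rewrite mulrDl -!mulrA hdi mulrBl mul1r hdi subrr mulr0 addr0. Qed.

Lemma mixR a b : (a * d + b * (1 - d)) * (1 - d) = b * (1 - d).
Proof.
by rewrite mulrDl -!mulrA (idem1m : (1 - d) * (1 - d) = 1 - d) mulrBr mulr1 hdi subrr mulr0 add0r.
Qed.

End Side.

Lemma combine (S : pzRingType) (q : {rmorphism R -> S}) (M : R -> Prop)
  (hk : kernel_is q M) (c : R) (hc : central (q c)) (hci : Defs.idempotent (q c)) x :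
  cleanmod n (fun y => M (y * c)) x -> cleanmod n (fun y => M (y * (1 - c))) x ->
  cleanmod n M x.
Proof.
move=> [e1 [he1 [u1 [v1 [huv1 hx1]]]]] [e2 [he2 [u2 [v2 [huv2 hx2]]]]].
pose mix (a b : R) := a * c + b * (1 - c).
have qmix a b : q (mix a b) = q a * q c + q b * (1 - q c).
  by rewrite /mix rmorphD !rmorphM rmorphB rmorph1.
have hc' := central1m hc; have hci' := idem1m hci.
have tr : forall z d, M (z * d) -> q z * q d = 0 by move=> z d /hk; rewrite rmorphM.
have hE1 : q (mix e1 e2) * q c = q e1 * q c by rewrite qmix mixL.
have hU1 : forall i, q (mix (u1 i) (u2 i)) * q c = q (u1 i) * q c.
  by move=> i; rewrite qmix mixL.
have hV1 : forall i, q (mix (v1 i) (v2 i)) * q c = q (v1 i) * q c.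
  by move=> i; rewrite qmix mixL.
have hE2 : q (mix e1 e2) * (1 - q c) = q e2 * (1 - q c) by rewrite qmix mixR.
have hU2 : forall i, q (mix (u1 i) (u2 i)) * (1 - q c) = q (u2 i) * (1 - q c).
  by move=> i; rewrite qmix mixR.
have hV2 : forall i, q (mix (v1 i) (v2 i)) * (1 - q c) = q (v2 i) * (1 - q c).
  by move=> i; rewrite qmix mixR.
have ha1 : (q e1 * q e1 - q e1) * q c = 0.
  by have := tr _ _ he1; rewrite rmorphB rmorphM.
have ha2 : (q e2 * q e2 - q e2) * (1 - q c) = 0.
  by have := tr _ _ he2; rewrite rmorphB rmorphM rmorphB rmorph1.
have huv1' : forall i, (q (u1 i) * q (v1 i) - 1) * q c = 0 /\ (q (v1 i) * q (u1 i) - 1) * q c = 0.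
  by move=> i; case: (huv1 i) => /tr + /tr; rewrite !rmorphB !rmorphM !rmorph1.
have huv2' : forall i, (q (u2 i) * q (v2 i) - 1) * (1 - q c) = 0 /\ (q (v2 i) * q (u2 i) - 1) * (1 - q c) = 0.
  by move=> i; case: (huv2 i) => /tr + /tr; rewrite !rmorphB !rmorphM !rmorph1.
have hx1' : (q x - (q e1 + \sum_(i < n) q (u1 i))) * q c = 0.
  by have := tr _ _ hx1; rewrite rmorphB rmorphD rmorph_sum.
have hx2' : (q x - (q e2 + \sum_(i < n) q (u2 i))) * (1 - q c) = 0.
  by have := tr _ _ hx2; rewrite !rmorphB rmorphD rmorph_sum rmorph1.
have [A1 [B1 C1]] := side hc hci hE1 hU1 hV1 ha1 huv1' hx1'.
have [A2 [B2 C2]] := side hc' hci' hE2 hU2 hV2 ha2 huv2' hx2'.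
exists (mix e1 e2); split.
  by apply/hk; rewrite rmorphB rmorphM; exact: split0 A1 A2.
exists (fun i => mix (u1 i) (u2 i)), (fun i => mix (v1 i) (v2 i)); split.
  move=> i; have [h1 h2] := B1 i; have [h3 h4] := B2 i.
  by split; apply/hk; rewrite rmorphB rmorphM rmorph1; [exact: split0 h1 h3|exact: split0 h2 h4].
by apply/hk; rewrite rmorphB rmorphD rmorph_sum; exact: split0 C1 C2.
Qed.


Lemma K0_P0 (Q : (R -> Prop) -> Prop) x : (1 : R) <> 0 -> Q (fun y => y = 0) ->
  ~ cleanmod n (fun y : R => y = 0) x -> P0 Q x (fun y => y = 0).
Proof.
move=> nz hQ hx; split; last by [].
split => //.
- by move=> a b -> ->; rewrite addr0.
- by move=> a ->; rewrite oppr0.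
- by move=> r a ->; rewrite mulr0.
- by move=> r a ->; rewrite mul0r.
Qed.

Lemma subM (M : R -> Prop) (c : R) : is_ideal M -> forall y, M y -> M (y * c).
Proof. by case=> _ _ _ _ hR y; apply: hR. Qed.

Lemma indec_to_clean :
  (forall (S : pzRingType) (f : {rmorphism R -> S}),
     factor_map f -> indecomposable S -> n_clean n S) -> n_clean n R.
Proof.
move=> H.
have [z|nz] := pselect ((1:R) = 0); first exact: trivial_clean.
apply: contrapT => nc.
have [x hx] : exists x, ~ cleanmod n (fun y : R => y = 0) x.
  apply: contrapT => hne; apply: nc; apply: clean0 => x.
  by apply: contrapT => hx; apply: hne; exists x.
have [M [[hM [hM1 [_ hMx]]] Mmax]] :=
  @zorn_ideal (fun _ => True) x (fun _ _ _ _ => I) _ (K0_P0 nz I hx).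
apply: (hMx).
apply: (transfer ((@qpi_factor _ _ hM)) ((qpi_kernel hM))).
apply: H; first exact: qpi_factor.
move=> [S1 [S2 [g [n1 [n2 [h gK hK]]]]]].
have hk : kernel_is (qpi hM) M := (qpi_kernel hM).
set d := h (1, 0).
have gd : g d = (1, 0) by rewrite /d hK.
have dc : central d.
  move=> y; apply: (can_inj gK); rewrite !rmorphM gd; case: (g y) => a b.
  by rewrite /GRing.mul /=; congr pair; rewrite ?mul1r ?mulr1 ?mul0r ?mulr0.
have di : Defs.idempotent d.
  apply: (can_inj gK); rewrite !rmorphM gd.
  by rewrite /GRing.mul /=; congr pair; rewrite ?mul1r ?mulr1 ?mul0r ?mulr0.
pose c := repr d.
have qc : (qpi hM : {rmorphism R -> quot hM hM}) c = d by exact: reprK.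
have hc : central (qpi hM c) by rewrite qc.
have hci : Defs.idempotent (qpi hM c) by rewrite qc.
have hc' : central (qpi hM (1 - c)) by rewrite rmorphB rmorph1 qc; exact: central1m.
have dn0 : d <> 0.
  move=> d0; apply: n1; move: gd; rewrite d0 rmorph0; by case.
have dn1 : d <> 1.
  move=> d1; apply: n2; move: gd; rewrite d1 rmorph1; by case.
have Mc : ~ M c by move=> /hk; rewrite qc.
have M1c : ~ M (1 - c).
  by move=> /hk; rewrite rmorphB rmorph1 qc => /subr0_eq /esym.
have h1 : cleanmod n (fun y => M (y * c)) x.
  apply: Mmax => //.
  - exact: idealK hk hc.
  - by rewrite mul1r.
  - by move=> y; apply: subM.
  - move=> sub; apply: M1c; apply: sub; apply/hk.
    by rewrite rmorphM rmorphB rmorph1 qc mulrBl mul1r di subrr.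
have h2 : cleanmod n (fun y => M (y * (1 - c))) x.
  apply: Mmax => //.
  - exact: idealK hk hc'.
  - by rewrite mul1r.
  - by move=> y; apply: subM.
  - move=> sub; apply: Mc; apply: sub; apply/hk.
    by rewrite rmorphM rmorphB rmorph1 qc mulrBr mulr1 di subrr.
exact: (hMx (combine hk hc hci h1 h2)).
Qed.

Definition gen_ci (K : R -> Prop) := exists E : R -> Prop,
  (forall e, E e -> central e /\ Defs.idempotent e) /\ (forall y, K y <-> ideal_gen E y).

Lemma gen_ci_chain x (F : (R -> Prop) -> Prop) : (forall K, F K -> P0 gen_ci x K) ->
  (exists K, F K) -> total_on F subset -> gen_ci (fun y => exists K, F K /\ K y).
Proof.
move=> FP Fne tot.
have hU : is_ideal (fun y => exists K, F K /\ K y).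
  by apply: chain_ideal => // K /FP [].
exists (fun e => (exists K, F K /\ K e) /\ central e /\ Defs.idempotent e).
split; first by move=> e [_ []].
move=> y; split.
- move=> [K [FK Ky]]; have [_ [_ [[EK [hEK hKE]] _]]] := FP K FK.
  apply: (gen_mono (E := EK)); last exact/hKE.
  move=> e he; split; last exact: hEK.
  by exists K; split => //; apply/hKE; apply: gen_sub.
- by apply: gen_min hU _ y => e [].
Qed.

Lemma pierce_to_clean :
  (forall (P : R -> Prop), pierce_ideal P ->
     forall (S : pzRingType) (f : {rmorphism R -> S}),
       factor_map f -> kernel_is f P -> n_clean n S) -> n_clean n R.
Proof.
move=> H.
have [z|nz] := pselect ((1:R) = 0); first exact: trivial_clean.
apply: contrapT => nc.
have [x hx] : exists x, ~ cleanmod n (fun y : R => y = 0) x.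
  apply: contrapT => hne; apply: nc; apply: clean0 => x.
  by apply: contrapT => hx; apply: hne; exists x.
have g0 : gen_ci (fun y : R => y = 0).
  exists (fun _ => False); split => // y; split.
  - by move=> -> J [].
  - apply: (@gen_min _ (fun y : R => y = 0)) => //.
    by case: (K0_P0 (Q := fun _ => True) nz I hx).
have [M [[hM [hM1 [hMg hMx]]] Mmax]] :=
  @zorn_ideal gen_ci x (@gen_ci_chain x) _ (K0_P0 nz g0 hx).
apply: (hMx).
apply: (transfer ((@qpi_factor _ _ hM)) ((qpi_kernel hM))).
apply: (H M); [|exact: qpi_factor|exact: qpi_kernel].
split; first by split.
move=> J [[hJ hJ1] [EJ [hEJ hJE]]] hMJ y Jy.
apply: contrapT => My.
have [g [Eg ng]] : exists g, EJ g /\ ~ M g.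
  apply: contrapT => hno; apply: My.
  apply: (gen_min hM); last exact/hJE.
  by move=> e he; apply: contrapT => ne; apply: hno; exists e.
have [gc gi] := hEJ g Eg.
have Jg : J g by apply/hJE; apply: gen_sub.
have hk : kernel_is (qpi hM) M := (qpi_kernel hM).
have gc' : central (1 - g) by exact: central1m.
have gi' : Defs.idempotent (1 - g) by exact: idem1m.
have hqg : central (qpi hM g) := central_q ((@qpi_factor _ _ hM)) gc.
have hqg' : central (qpi hM (1 - g)) := central_q ((@qpi_factor _ _ hM)) gc'.
have hqgi : Defs.idempotent (qpi hM g) by rewrite /Defs.idempotent -rmorphM gi.
have [EM [hEM hMEM]] := hMg.
have J1 : forall a, J a -> J (1 - a) -> False.
  move=> a ha hb; apply: hJ1; rewrite -(subrK a 1).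
  by case: hJ => _ hD _ _ _; apply: hD.
have gg : g * (1 - g) = 0 by rewrite mulrBr mulr1 gi subrr.
have gg' : (1 - g) * g = 0 by rewrite mulrBl mul1r gi subrr.
have hM0 : M 0 by case: (hM).
have h1 : cleanmod n (fun y => M (y * (1 - g))) x.
  apply: Mmax.
  - exact: idealK hk hqg'.
  - by rewrite mul1r => /hMJ; apply: J1.
  - exists (fun e => EM e \/ e = 1 - (1 - g)); split.
      by move=> e [/hEM //|->]; split; [exact: central1m|exact: idem1m].
    by apply: genK => //; exact: idealK hk hqg'.
  - by move=> y0; apply: subM.
  - by move=> sub; apply: ng; apply: sub; rewrite gg.
have h2 : cleanmod n (fun y => M (y * g)) x.
  apply: Mmax.
  - exact: idealK hk hqg.
  - by rewrite mul1r.
  - exists (fun e => EM e \/ e = 1 - g); split.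
      by move=> e [/hEM //|->]; split.
    by apply: genK => //; exact: idealK hk hqg.
  - by move=> y0; apply: subM.
  - by move=> sub; apply: (J1 g Jg); apply: hMJ; apply: sub; rewrite gg'.
exact: (hMx (combine hk hqg hqgi h2 h1)).
Qed.

End Main.

Theorem proposition2 (R : pzRingType) (n : nat) (hn : (0 < n)%N) :
  [<-> n_clean n R;
       (forall (S : pzRingType) (f : {rmorphism R -> S}),
          factor_map f -> n_clean n S);
       (forall (S : pzRingType) (f : {rmorphism R -> S}),
          factor_map f -> indecomposable S -> n_clean n S);
       (forall (P : R -> Prop), pierce_ideal P ->
          forall (S : pzRingType) (f : {rmorphism R -> S}),
            factor_map f -> kernel_is f P -> n_clean n S)].
Proof.
tfae.
- by move=> h S f hf; exact: surj_clean hf h.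
- by move=> h S f hf _; exact: h.
- move=> h P _ S f hf _.
  exact: surj_clean hf (indec_to_clean h).
- exact: pierce_to_clean.
Qed.
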